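(* The category of finite graphs and the category of all (possibly infinite) graphs each have splitting coproducts and disjoint coproducts, and in each binary products distribute over binary coproducts, i.e. $A\times(B\sqcup C)\cong(A\times B)\sqcup(A\times C)$ canonically. Consequently, on each of these categories the generalized core model structure and the generalized cocore model structure are both left proper and right proper.
   Context: A graph is a set $V$ of vertices together with a symmetric relation $E\subseteq V\times V$ (undirected, no repeated edges); it is finite if $V$ is finite. Morphisms of graphs are maps of vertex sets preserving $E$; products and coproducts are categorical ones. Splitting coproducts: every $f:X\to A\sqcup B$ is isomorphic to $f_L\sqcup f_R$ with $f_L:X_L\to A$, $f_R:X_R\to B$, $X\cong X_L\sqcup X_R$. Disjoint coproducts: coproduct injections are monic, the pullback of $i_1:A\to A\sqcup B$ and $i_2:B\to A\sqcup B$ is the initial object, and the pullback of $i_1$ along itself (resp. $i_2$ along itself) is $A$ (resp. $B$) with identity maps. Generalized core model structure: weak equivalences are morphisms $f:A\to B$ for which some morphism $B\to A$ exists; cofibrations are morphisms with the left lifting property against all retractions; fibrations have the right lifting property against all acyclic cofibrations. Generalized cocore model structure: same weak equivalences; fibrations are morphisms with the right lifting property against all sections; cofibrations have the left lifting property against all acyclic fibrations. Left (resp. right) proper: pushouts of weak equivalences along cofibrations (resp. pullbacks along fibrations) are weak equivalences. *)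

(* Defs.v *)
From Stdlib Require Import List.

(** A graph: vertex type with a symmetric edge relation (loops allowed). *)
Record graph := Graph {
  V :> Type;
  E : V -> V -> Prop;
  E_sym : forall x y, E x y -> E y x }.

Record hom (A B : graph) := Hom {
  hmap :> V A -> V B;
  hmap_E : forall x y, E A x y -> E B (hmap x) (hmap y) }.
Arguments hmap {A B}.
Arguments Hom {A B}.

Definition heq {A B} (f g : hom A B) : Prop := forall x, f x = g x.

Definition hid (A : graph) : hom A A := Hom (fun x => x) (fun x y h => h).
Definition hcomp {A B C} (g : hom B C) (f : hom A B) : hom A C :=
  Hom (fun x => g (f x)) (fun x y h => hmap_E _ _ g _ _ (hmap_E _ _ f _ _ h)).

(** A full subcategory of graphs is given by a predicate on objects. *)
Definition cls := graph -> Prop.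
Definition all_graphs : cls := fun _ => True.
Definition finite_graph : cls := fun G => exists l : list (V G), forall v, In v l.

Section Cat.
Variable P : cls.

Definition is_iso {A B} (f : hom A B) : Prop :=
  exists g : hom B A, heq (hcomp g f) (hid A) /\ heq (hcomp f g) (hid B).

Definition monic {A B} (f : hom A B) : Prop :=
  forall X, P X -> forall g h : hom X A, heq (hcomp f g) (hcomp f h) -> heq g h.

Definition is_initial (I : graph) : Prop :=
  P I /\ forall X, P X -> exists h : hom I X, forall h' : hom I X, heq h' h.

Definition is_coproduct {A B C : graph} (i1 : hom A C) (i2 : hom B C) : Prop :=
  P C /\ forall X, P X -> forall (f : hom A X) (g : hom B X),
    exists h : hom C X, heq (hcomp h i1) f /\ heq (hcomp h i2) g /\
      forall h' : hom C X, heq (hcomp h' i1) f -> heq (hcomp h' i2) g -> heq h' h.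

Definition is_product {A B C : graph} (p1 : hom C A) (p2 : hom C B) : Prop :=
  P C /\ forall X, P X -> forall (f : hom X A) (g : hom X B),
    exists h : hom X C, heq (hcomp p1 h) f /\ heq (hcomp p2 h) g /\
      forall h' : hom X C, heq (hcomp p1 h') f -> heq (hcomp p2 h') g -> heq h' h.

Definition is_pullback {A B Z} (f : hom A Z) (g : hom B Z)
    (Q : graph) (p1 : hom Q A) (p2 : hom Q B) : Prop :=
  P Q /\ heq (hcomp f p1) (hcomp g p2) /\
  forall X, P X -> forall (u : hom X A) (v : hom X B),
    heq (hcomp f u) (hcomp g v) ->
    exists h : hom X Q, heq (hcomp p1 h) u /\ heq (hcomp p2 h) v /\
      forall h' : hom X Q, heq (hcomp p1 h') u -> heq (hcomp p2 h') v -> heq h' h.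

Definition is_pushout {A B Z} (f : hom Z A) (g : hom Z B)
    (Q : graph) (q1 : hom A Q) (q2 : hom B Q) : Prop :=
  P Q /\ heq (hcomp q1 f) (hcomp q2 g) /\
  forall X, P X -> forall (u : hom A X) (v : hom B X),
    heq (hcomp u f) (hcomp v g) ->
    exists h : hom Q X, heq (hcomp h q1) u /\ heq (hcomp h q2) v /\
      forall h' : hom Q X, heq (hcomp h' q1) u -> heq (hcomp h' q2) v -> heq h' h.

Definition splitting_coproducts : Prop :=
  forall A B, P A -> P B -> forall (C : graph) (i1 : hom A C) (i2 : hom B C),
  is_coproduct i1 i2 ->
  forall X, P X -> forall f : hom X C,
  exists (XL XR : graph) (fL : hom XL A) (fR : hom XR B)
         (X' : graph) (j1 : hom XL X') (j2 : hom XR X')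
         (fLR : hom X' C) (phi : hom X X'),
    P XL /\ P XR /\ is_coproduct j1 j2 /\
    heq (hcomp fLR j1) (hcomp i1 fL) /\ heq (hcomp fLR j2) (hcomp i2 fR) /\
    is_iso phi /\ heq f (hcomp fLR phi).

Definition disjoint_coproducts : Prop :=
  forall A B, P A -> P B -> forall (C : graph) (i1 : hom A C) (i2 : hom B C),
  is_coproduct i1 i2 ->
  monic i1 /\ monic i2 /\
  (exists (Q : graph) (p1 : hom Q A) (p2 : hom Q B),
      is_pullback i1 i2 Q p1 p2 /\ is_initial Q) /\
  is_pullback i1 i1 A (hid A) (hid A) /\
  is_pullback i2 i2 B (hid B) (hid B).

Definition products_distribute : Prop :=
  forall A B C, P A -> P B -> P C ->
  forall (D : graph) (i1 : hom B D) (i2 : hom C D), is_coproduct i1 i2 ->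
  forall (AD : graph) (pa : hom AD A) (pd : hom AD D), is_product pa pd ->
  forall (AB : graph) (qa : hom AB A) (qb : hom AB B), is_product qa qb ->
  forall (AC : graph) (ra : hom AC A) (rc : hom AC C), is_product ra rc ->
  forall (S : graph) (j1 : hom AB S) (j2 : hom AC S), is_coproduct j1 j2 ->
  forall u : hom S AD,
    heq (hcomp pa (hcomp u j1)) qa ->
    heq (hcomp pd (hcomp u j1)) (hcomp i1 qb) ->
    heq (hcomp pa (hcomp u j2)) ra ->
    heq (hcomp pd (hcomp u j2)) (hcomp i2 rc) ->
    is_iso u.

Definition lifts {A B X Y} (i : hom A B) (p : hom X Y) : Prop :=
  forall (u : hom A X) (v : hom B Y), heq (hcomp p u) (hcomp v i) ->
  exists h : hom B X, heq (hcomp h i) u /\ heq (hcomp p h) v.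

Definition weq {A B} (f : hom A B) : Prop := exists g : hom B A, True.
Definition retraction {X Y} (p : hom X Y) : Prop :=
  exists s : hom Y X, heq (hcomp p s) (hid Y).
Definition section {A B} (s : hom A B) : Prop :=
  exists r : hom B A, heq (hcomp r s) (hid A).

Definition core_cof {A B} (i : hom A B) : Prop :=
  forall X Y, P X -> P Y -> forall p : hom X Y, retraction p -> lifts i p.
Definition core_fib {X Y} (p : hom X Y) : Prop :=
  forall A B, P A -> P B -> forall i : hom A B, core_cof i -> weq i -> lifts i p.

Definition cocore_fib {X Y} (p : hom X Y) : Prop :=
  forall A B, P A -> P B -> forall i : hom A B, section i -> lifts i p.
Definition cocore_cof {A B} (i : hom A B) : Prop :=
  forall X Y, P X -> P Y -> forall p : hom X Y, cocore_fib p -> weq p -> lifts i p.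

Definition left_proper (cof : forall A B, hom A B -> Prop) : Prop :=
  forall Z A B, P Z -> P A -> P B ->
  forall (f : hom Z A) (g : hom Z B), weq f -> cof Z B g ->
  forall (Q : graph) (q1 : hom A Q) (q2 : hom B Q),
    is_pushout f g Q q1 q2 -> weq q2.

Definition right_proper (fib : forall A B, hom A B -> Prop) : Prop :=
  forall A B Z, P A -> P B -> P Z ->
  forall (f : hom A Z) (g : hom B Z), fib A Z f -> weq g ->
  forall (Q : graph) (p1 : hom Q A) (p2 : hom Q B),
    is_pullback f g Q p1 p2 -> weq p1.

Definition corollary5_for : Prop :=
  splitting_coproducts /\ disjoint_coproducts /\ products_distribute /\
  left_proper (@core_cof) /\ right_proper (@core_fib) /\
  left_proper (@cocore_cof) /\ right_proper (@cocore_fib).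

End Cat.

(* Main.v *)
Require Import Defs.
From Stdlib Require Import List ProofIrrelevance.
Import ListNotations.

Definition sumE {A B : graph} (x y : (V A + V B)%type) : Prop :=
  match x, y with
  | inl a, inl a' => E A a a'
  | inr b, inr b' => E B b b'
  | _, _ => False end.
Lemma sumE_sym {A B : graph} (x y : (V A + V B)%type) : sumE x y -> sumE y x.
Proof. destruct x, y; simpl; try tauto; apply E_sym. Qed.
Definition gsum (A B : graph) : graph := Graph (V A + V B)%type (@sumE A B) (@sumE_sym A B).
Definition ginl (A B : graph) : hom A (gsum A B) := Hom (B:=gsum A B) (fun a => inl a) (fun x y h => h).
Definition ginr (A B : graph) : hom B (gsum A B) := Hom (B:=gsum A B) (fun a => inr a) (fun x y h => h).
Definition gcopair {A B C : graph} (f : hom A C) (g : hom B C) : hom (gsum A B) C.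
Proof.
  refine (@Hom (gsum A B) C (fun x => match x with inl a => f a | inr b => g b end) _).
  intros [a|b] [a'|b'] h; simpl in h; try contradiction; apply hmap_E; exact h.
Defined.

Definition prodE {A B : graph} (x y : (V A * V B)%type) : Prop :=
  E A (fst x) (fst y) /\ E B (snd x) (snd y).
Lemma prodE_sym {A B : graph} (x y : (V A * V B)%type) : prodE x y -> prodE y x.
Proof. intros [h1 h2]; split; apply E_sym; assumption. Qed.
Definition gprod (A B : graph) : graph := Graph (V A * V B)%type (@prodE A B) (@prodE_sym A B).
Definition gfst (A B : graph) : hom (gprod A B) A := @Hom (gprod A B) A fst (fun x y h => proj1 h).
Definition gsnd (A B : graph) : hom (gprod A B) B := @Hom (gprod A B) B snd (fun x y h => proj2 h).
Definition gpair {X A B : graph} (f : hom X A) (g : hom X B) : hom X (gprod A B) :=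
  @Hom X (gprod A B) (fun x => (f x, g x)) (fun x y h => conj (hmap_E _ _ f _ _ h) (hmap_E _ _ g _ _ h)).

Definition gempty : graph := Graph Empty_set (fun _ _ => False) (fun _ _ h => h).
Definition from_empty (X : graph) : hom gempty X :=
  @Hom gempty X (fun x => match x with end) (fun x => match x with end).

Record closed (P : cls) := {
  cl_sum : forall A B, P A -> P B -> P (gsum A B);
  cl_prod : forall A B, P A -> P B -> P (gprod A B);
  cl_img : forall (X Y : graph) (g : V X -> option (V Y)), P X ->
      (forall y, exists x, g x = Some y) -> P Y;
  cl_empty : P gempty }.

Lemma closed_all : closed all_graphs.
Proof. split; intros; exact I. Qed.

Lemma closed_fin : closed finite_graph.
Proof.
  split.
  - intros A B [l1 H1] [l2 H2]. exists (map inl l1 ++ map inr l2).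
    intros [a|b]; apply in_or_app; [left|right]; apply in_map; auto.
  - intros A B [l1 H1] [l2 H2]. exists (list_prod l1 l2).
    intros [a b]; apply in_prod; auto.
  - intros X Y g [l H] Hs.
    exists (flat_map (fun x => match g x with Some y => [y] | None => [] end) l).
    intro y. destruct (Hs y) as [x Hx]. apply in_flat_map. exists x.
    split; [auto|]. rewrite Hx. left; reflexivity.
  - exists []. intros [].
Qed.

Lemma coprod_uniq (P : cls) {A B C : graph} (i1 : hom A C) (i2 : hom B C) :
  is_coproduct P i1 i2 -> forall X, P X -> forall h h' : hom C X,
  heq (hcomp h i1) (hcomp h' i1) -> heq (hcomp h i2) (hcomp h' i2) -> heq h h'.
Proof.
  intros [_ U] X PX h h' H1 H2.
  destruct (U X PX (hcomp h i1) (hcomp h i2)) as [k [_ [_ Hk]]].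
  intro c. rewrite (Hk h (fun _ => eq_refl) (fun _ => eq_refl) c).
  rewrite (Hk h' (fun x => eq_sym (H1 x)) (fun x => eq_sym (H2 x)) c). reflexivity.
Qed.

Lemma prod_uniq (P : cls) {A B C : graph} (p1 : hom C A) (p2 : hom C B) :
  is_product P p1 p2 -> forall X, P X -> forall h h' : hom X C,
  heq (hcomp p1 h) (hcomp p1 h') -> heq (hcomp p2 h) (hcomp p2 h') -> heq h h'.
Proof.
  intros [_ U] X PX h h' H1 H2.
  destruct (U X PX (hcomp p1 h) (hcomp p2 h)) as [k [_ [_ Hk]]].
  intro c. rewrite (Hk h (fun _ => eq_refl) (fun _ => eq_refl) c).
  rewrite (Hk h' (fun x => eq_sym (H1 x)) (fun x => eq_sym (H2 x)) c). reflexivity.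
Qed.

Lemma coprod_char (P : cls) (HP : closed P) {A B C : graph} (i1 : hom A C) (i2 : hom B C) :
  P A -> P B -> is_coproduct P i1 i2 ->
  exists phi : hom C (gsum A B), (forall a, phi (i1 a) = inl a) /\
    (forall b, phi (i2 b) = inr b) /\ (forall c, gcopair i1 i2 (phi c) = c).
Proof.
  intros PA PB Hc. pose proof Hc as [PC U].
  destruct (U _ (cl_sum P HP A B PA PB) (ginl A B) (ginr A B)) as [phi [H1 [H2 _]]].
  exists phi. split; [exact H1|split; [exact H2|]].
  apply (coprod_uniq P i1 i2 Hc C PC (hcomp (gcopair i1 i2) phi) (hid C)).
  - intro a; cbn. pose proof (H1 a) as e; cbn in e; rewrite e; reflexivity.
  - intro a; cbn. pose proof (H2 a) as e; cbn in e; rewrite e; reflexivity.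
Qed.

Lemma prod_char (P : cls) (HP : closed P) {A B C : graph} (p1 : hom C A) (p2 : hom C B) :
  P A -> P B -> is_product P p1 p2 ->
  exists sg : hom (gprod A B) C, (forall x, p1 (sg x) = fst x) /\
    (forall x, p2 (sg x) = snd x) /\ (forall c, sg (p1 c, p2 c) = c).
Proof.
  intros PA PB Hc. pose proof Hc as [PC U].
  destruct (U _ (cl_prod P HP A B PA PB) (gfst A B) (gsnd A B)) as [sg [H1 [H2 _]]].
  exists sg. split; [exact H1|split; [exact H2|]].
  apply (prod_uniq P p1 p2 Hc C PC (hcomp sg (gpair p1 p2)) (hid C)).
  - intro a; cbn. pose proof (H1 (p1 a, p2 a)) as e; cbn in e; rewrite e; reflexivity.
  - intro a; cbn. pose proof (H2 (p1 a, p2 a)) as e; cbn in e; rewrite e; reflexivity.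
Qed.

Definition subg (X : graph) (T : V X -> Type) : graph :=
  Graph (sigT T) (fun l l' => E X (projT1 l) (projT1 l'))
        (fun l l' h => E_sym X _ _ h).
Definition incl (X : graph) (T : V X -> Type) : hom (subg X T) X :=
  @Hom (subg X T) X (@projT1 _ T) (fun _ _ h => h).

Section Split.
Variables (X A B : graph) (k : hom X (gsum A B)).
Definition TL (x : V X) := {a : V A | k x = inl a}.
Definition TR (x : V X) := {b : V B | k x = inr b}.

Definition dec (x : V X) : TL x + TR x.
Proof.
  unfold TL, TR. destruct (hmap k x : (V A + V B)%type) as [a|b] eqn:Ee;
  [left; exists a | right; exists b]; reflexivity.
Defined.

Definition splitk (x : V X) : sigT TL + sigT TR :=
  match dec x with inl t => inl (existT _ x t) | inr t => inr (existT _ x t) end.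

Lemma splitk_l x a (e : k x = inl a) : splitk x = inl (existT _ x (exist _ a e)).
Proof.
  unfold splitk. destruct (dec x) as [[a' e']|[b' e']].
  - assert (a' = a) by congruence. subst. f_equal. f_equal. f_equal. apply proof_irrelevance.
  - congruence.
Qed.
Lemma splitk_r x b (e : k x = inr b) : splitk x = inr (existT _ x (exist _ b e)).
Proof.
  unfold splitk. destruct (dec x) as [[a' e']|[b' e']].
  - congruence.
  - assert (b' = b) by congruence. subst. f_equal. f_equal. f_equal. apply proof_irrelevance.
Qed.

Lemma splitk_cases x :
  (exists a (e : k x = inl a), splitk x = inl (existT _ x (exist _ a e))) \/
  (exists b (e : k x = inr b), splitk x = inr (existT _ x (exist _ b e))).
Proof.
  assert (Hs : (exists a, k x = inl a) \/ (exists b, k x = inr b)).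
  { destruct (hmap k x : (V A + V B)%type) as [a|b]; eauto. }
  destruct Hs as [[a Ee]|[b Ee]].
  - left. exists a, Ee. apply splitk_l.
  - right. exists b, Ee. apply splitk_r.
Qed.

Definition XL := subg X TL.
Definition XR := subg X TR.

Definition fL : hom XL A.
Proof.
  refine (@Hom XL A (fun l => proj1_sig (projT2 l)) _).
  intros [x [a e]] [y [a' e']] H; simpl in *.
  pose proof (hmap_E _ _ k _ _ H) as H'. rewrite e, e' in H'. exact H'.
Defined.
Definition fR : hom XR B.
Proof.
  refine (@Hom XR B (fun l => proj1_sig (projT2 l)) _).
  intros [x [a e]] [y [a' e']] H; simpl in *.
  pose proof (hmap_E _ _ k _ _ H) as H'. rewrite e, e' in H'. exact H'.
Defined.

Definition hsplit {Y : graph} (g1 : hom XL Y) (g2 : hom XR Y) : hom X Y.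
Proof.
  refine (@Hom X Y (fun x => match splitk x with inl l => g1 l | inr r => g2 r end) _).
  intros x y H.
  pose proof (hmap_E _ _ k _ _ H) as H'.
  destruct (splitk_cases x) as [[a [e ->]]|[b [e ->]]];
  destruct (splitk_cases y) as [[a' [e' ->]]|[b' [e' ->]]];
  rewrite e, e' in H'; simpl in H'; try contradiction; apply hmap_E; exact H.
Defined.

Lemma split_coprod (P : cls) (HP : closed P) : P X -> is_coproduct P (incl X TL) (incl X TR).
Proof.
  intros PX. split; [exact PX|].
  intros Y PY g1 g2. exists (hsplit g1 g2). split; [|split].
  - intros [x [a e]]. cbn. rewrite (splitk_l x a e). reflexivity.
  - intros [x [a e]]. cbn. rewrite (splitk_r x a e). reflexivity.
  - intros h' H1 H2 x. cbn.
    destruct (splitk_cases x) as [[a [e Ex]]|[b [e Ex]]]; rewrite Ex.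
    + exact (H1 (existT _ x (exist _ a e))).
    + exact (H2 (existT _ x (exist _ b e))).
Qed.

Lemma PXL (P : cls) (HP : closed P) : P X -> P XL.
Proof.
  intros PX. apply (cl_img P HP X XL (fun x => match splitk x with inl l => Some l | inr _ => None end) PX).
  intros [x [a e]]. exists x. rewrite (splitk_l x a e). reflexivity.
Qed.
Lemma PXR (P : cls) (HP : closed P) : P X -> P XR.
Proof.
  intros PX. apply (cl_img P HP X XR (fun x => match splitk x with inr l => Some l | inl _ => None end) PX).
  intros [x [a e]]. exists x. rewrite (splitk_r x a e). reflexivity.
Qed.
End Split.

Lemma splitting (P : cls) (HP : closed P) : splitting_coproducts P.
Proof.
  intros A B PA PB C i1 i2 Hc X PX f.
  destruct (coprod_char P HP i1 i2 PA PB Hc) as [phi [H1 [H2 H3]]].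
  set (k := hcomp phi f).
  exists (XL X A B k), (XR X A B k), (fL X A B k), (fR X A B k), X,
    (incl X (TL X A B k)), (incl X (TR X A B k)), f, (hid X).
  split; [apply PXL; auto|]. split; [apply PXR; auto|].
  split; [apply split_coprod; auto|].
  split; [|split; [|split]].
  - intros [x [a e]]. cbn. cbn in e. rewrite <- (H3 (f x)). rewrite e. reflexivity.
  - intros [x [a e]]. cbn. cbn in e. rewrite <- (H3 (f x)). rewrite e. reflexivity.
  - exists (hid X). split; intro; reflexivity.
  - intro; reflexivity.
Qed.

Lemma disjoint (P : cls) (HP : closed P) : disjoint_coproducts P.
Proof.
  intros A B PA PB C i1 i2 Hc.
  destruct (coprod_char P HP i1 i2 PA PB Hc) as [phi [H1 [H2 H3]]].
  split; [|split; [|split; [|split]]].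
  - intros X PX g h H x. specialize (H x); cbn in H.
    apply (f_equal phi) in H. rewrite !H1 in H. injection H; auto.
  - intros X PX g h H x. specialize (H x); cbn in H.
    apply (f_equal phi) in H. rewrite !H2 in H. injection H; auto.
  - exists gempty, (from_empty A), (from_empty B). split; [split; [|split]|split].
    + exact (cl_empty P HP).
    + intros [].
    + intros X PX u v H.
      assert (F : forall x : V X, False).
      { intro x. specialize (H x); cbn in H. apply (f_equal phi) in H.
        rewrite H1, H2 in H. discriminate. }
      exists (@Hom X gempty (fun x => False_rect _ (F x)) (fun x _ _ => False_rect _ (F x))).
      split; [intro x; destruct (F x)|split; [intro x; destruct (F x)|intros h' _ _ x; destruct (F x)]].
    + exact (cl_empty P HP).
    + intros X PX. exists (from_empty X). intros h' [].
  - split; [exact PA|split; [intro; reflexivity|]].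
    intros X PX u v H. exists u. split; [intro; reflexivity|split].
    + intro x. specialize (H x); cbn in H. apply (f_equal phi) in H.
      rewrite !H1 in H. injection H; auto.
    + intros h' Hh _ x. exact (Hh x).
  - split; [exact PB|split; [intro; reflexivity|]].
    intros X PX u v H. exists u. split; [intro; reflexivity|split].
    + intro x. specialize (H x); cbn in H. apply (f_equal phi) in H.
      rewrite !H2 in H. injection H; auto.
    + intros h' Hh _ x. exact (Hh x).
Qed.

Definition distw {A B C D AD AB AC S : graph} (phi : hom D (gsum B C))
  (pa : hom AD A) (pd : hom AD D) (s1 : hom (gprod A B) AB) (s2 : hom (gprod A C) AC)
  (j1 : hom AB S) (j2 : hom AC S) : hom AD S.
Proof.
  refine (@Hom AD S (fun z => match (phi (pd z) : (V B + V C)%type) with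
     | inl b => j1 (s1 (pa z, b)) | inr c => j2 (s2 (pa z, c)) end) _).
  intros z z' H.
  pose proof (hmap_E _ _ phi _ _ (hmap_E _ _ pd _ _ H)) as H2.
  pose proof (hmap_E _ _ pa _ _ H) as H3.
  cbv beta. destruct (hmap phi (hmap pd z) : (V B + V C)%type);
  destruct (hmap phi (hmap pd z') : (V B + V C)%type); simpl in H2; try contradiction;
  apply hmap_E; apply hmap_E; split; assumption.
Defined.

Lemma distrib (P : cls) (HP : closed P) : products_distribute P.
Proof.
  intros A B C PA PB PC D i1 i2 Hd AD pa pd Hpd AB qa qb Hab AC ra rc Hac S j1 j2 Hs u
    U1 U2 U3 U4.
  destruct (coprod_char P HP i1 i2 PB PC Hd) as [phi [F1 [F2 F3]]].
  assert (PD : P D) by (destruct Hd; auto).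
  destruct (prod_char P HP qa qb PA PB Hab) as [s1 [S1 [S2 S3]]].
  destruct (prod_char P HP ra rc PA PC Hac) as [s2 [T1 [T2 T3]]].
  exists (distw phi pa pd s1 s2 j1 j2). split.
  - apply (coprod_uniq P j1 j2 Hs S (proj1 Hs)).
    + intro y. cbn. pose proof (U1 y) as e1. pose proof (U2 y) as e2. cbn in e1, e2.
      rewrite e2, F1, e1, S3. reflexivity.
    + intro y. cbn. pose proof (U3 y) as e1. pose proof (U4 y) as e2. cbn in e1, e2.
      rewrite e2, F2, e1, T3. reflexivity.
  - apply (prod_uniq P pa pd Hpd AD (proj1 Hpd)).
    + intro z. cbn. pose proof (F3 (pd z)) as e.
      destruct (hmap phi (hmap pd z) : (V B + V C)%type) as [b|c].
      * pose proof (U1 (s1 (pa z, b))) as e1. cbn in e1. rewrite e1, S1. reflexivity.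
      * pose proof (U3 (s2 (pa z, c))) as e1. cbn in e1. rewrite e1, T1. reflexivity.
    + intro z. cbn. pose proof (F3 (pd z)) as e.
      destruct (hmap phi (hmap pd z) : (V B + V C)%type) as [b|c].
      * pose proof (U2 (s1 (pa z, b))) as e1. cbn in e1. rewrite e1, S2. exact e.
      * pose proof (U4 (s2 (pa z, c))) as e1. cbn in e1. rewrite e1, T2. exact e.
Qed.

Lemma lp_from_ext (P : cls) {Z A B : graph} (f : hom Z A) (g : hom Z B) (r : hom A Z)
  (v : hom B B) : P B -> (forall z, v (g z) = g (r (f z))) ->
  forall Q q1 q2, is_pushout P f g Q q1 q2 -> weq q2.
Proof.
  intros PB Hv Q q1 q2 [_ [_ U]].
  destruct (U B PB (hcomp g r) v) as [h _].
  - intro z. cbn. symmetry. apply Hv.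
  - exists h. exact I.
Qed.

Lemma rp_from_lift (P : cls) {A B Z : graph} (f : hom A Z) (g : hom B Z) (s : hom Z B) :
  P A -> lifts (ginl A A) f -> forall Q p1 p2, is_pullback P f g Q p1 p2 -> weq p1.
Proof.
  intros PA Hl Q p1 p2 [_ [_ U]].
  destruct (Hl (hid A) (gcopair f (hcomp g (hcomp s f)))) as [hh [K1 K2]].
  - intro a; reflexivity.
  - destruct (U A PA (hcomp hh (ginr A A)) (hcomp s f)) as [h _].
    + intro a. pose proof (K2 (inr a)) as e. cbn in e |- *. exact e.
    + exists h. exact I.
Qed.

Lemma inl_lifts_retr {A X Y : graph} (p : hom X Y) : retraction p -> lifts (ginl A A) p.
Proof.
  intros [s' Hs'] u v Hsq.
  exists (gcopair u (hcomp s' (hcomp v (ginr A A)))). split.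
  - intro a; reflexivity.
  - intros [a|a]; cbn.
    + exact (Hsq a).
    + exact (Hs' (v (inr a))).
Qed.

Lemma main (P : cls) (HP : closed P) : corollary5_for P.
Proof.
  split; [apply splitting; auto|].
  split; [apply disjoint; auto|].
  split; [apply distrib; auto|].
  split; [|split; [|split]].
  -
    intros Z A B PZ PA PB f g [r _] Hcof Q q1 q2 Hpo.
    destruct (Hcof (gsum Z B) B (cl_sum P HP Z B PZ PB) PB (gcopair g (hid B))
                (ex_intro _ (ginr Z B) (fun _ => eq_refl)) (ginl Z B) (hid B)
                (fun _ => eq_refl)) as [hh [K1 _]].
    apply (lp_from_ext P f g r (hcomp (gcopair (hcomp g (hcomp r f)) (hid B)) hh) PB)
      with (q1 := q1); auto.
    intro z. cbn. pose proof (K1 z) as e. cbn in e. rewrite e. reflexivity.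
  -
    intros A B Z PA PB PZ f g Hf [s _] Q p1 p2 Hpb.
    apply (rp_from_lift P f g s PA) with (p2 := p2); auto.
    apply (Hf A (gsum A A) PA (cl_sum P HP A A PA PA)).
    + intros X Y _ _ p Hp. apply inl_lifts_retr; auto.
    + exists (gcopair (hid A) (hid A)). exact I.
  -
    intros Z A B PZ PA PB f g [r _] Hcof Q q1 q2 Hpo.
    assert (Hfib : cocore_fib P (gfst B B)).
    { intros A' B' _ _ i [rho Hrho] u' v' Hsq.
      exists (gpair v' (hcomp (gsnd B B) (hcomp u' rho))). split.
      - intro a. cbn. pose proof (Hrho a) as e. cbn in e. rewrite e.
        pose proof (Hsq a) as e2. cbn in e2. rewrite <- e2. destruct (hmap u' a); reflexivity.
      - intro; reflexivity. }
    destruct (Hcof (gprod B B) B (cl_prod P HP B B PB PB) PB (gfst B B) Hfib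
               (ex_intro _ (gpair (hid B) (hid B)) I)
               (gpair g (hcomp g (hcomp r f))) (hid B) (fun _ => eq_refl)) as [hh [K1 _]].
    apply (lp_from_ext P f g r (hcomp (gsnd B B) hh) PB) with (q1 := q1); auto.
    intro z. cbn. pose proof (K1 z) as e. cbn in e. rewrite e. reflexivity.
  -
    intros A B Z PA PB PZ f g Hf [s _] Q p1 p2 Hpb.
    apply (rp_from_lift P f g s PA) with (p2 := p2); auto.
    apply (Hf A (gsum A A) PA (cl_sum P HP A A PA PA)).
    exists (gcopair (hid A) (hid A)). intro; reflexivity.
Qed.

Theorem corollary5 :
  corollary5_for finite_graph /\ corollary5_for all_graphs.
Proof. split; apply main; [apply closed_fin | apply closed_all]. Qed.
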